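(* Let $n$ be a prime number, let $S\subseteq\{1,2,\ldots,\lfloor n/2\rfloor\}$, let $G=C_n(S)$ be the circulant graph on $S$, let $K$ be a field, $R=K[x_0,\ldots,x_{n-1}]$, and let $I(G)$ be the edge ideal of $G$. Then the regularity index of $R/I(G)$ equals $1$: \[ \mathrm{ri}(R/I(G))=1. \]
   Context: For $k\in\mathbb{Z}$ write $|k|_n=\min\{|k|,\,n-|k|\}$. The circulant graph $C_n(S)$ has vertex set $\mathbb{Z}_n=\{0,1,\ldots,n-1\}$ and edge set $\{\{i,j\} : |j-i|_n\in S\}$. The edge ideal $I(G)\subseteq R$ is generated by the monomials $x_ix_j$ with $\{i,j\}$ an edge of $G$. For a homogeneous ideal $I$ of $R$, the Hilbert function is $H_{R/I}(k)=\dim_K (R/I)_k$, and $P_{R/I}$ is the unique polynomial with $H_{R/I}(k)=P_{R/I}(k)$ for all $k\gg0$ (the Hilbert polynomial). The regularity index $\mathrm{ri}(R/I)$ is the minimum integer $k_0\in\mathbb{N}$ such that $H_{R/I}(k)=P_{R/I}(k)$ for all $k\ge k_0$. *)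

(* Defs.v *)
From HB Require Import structures.
From mathcomp Require Import all_boot all_order all_algebra.
From mathcomp Require Import mpoly.
Set Implicit Arguments. Unset Strict Implicit. Unset Printing Implicit Defensive.
Import Order.TTheory GRing.Theory Num.Theory.
Local Open Scope ring_scope.

Definition cdist (n : nat) (i j : 'I_n) : nat :=
  minn (maxn i j - minn i j) (n - (maxn i j - minn i j)).

Definition circ_edge (n : nat) (S : seq nat) (i j : 'I_n) : bool :=
  (i != j) && (cdist i j \in S).

Definition in_edge_ideal (K : fieldType) (n : nat) (e : rel 'I_n)
    (f : {mpoly K[n]}) : Prop :=
  exists c : 'I_n -> 'I_n -> {mpoly K[n]},
    f = \sum_(i < n) \sum_(j < n) (if e i j then c i j * ('X_i * 'X_j) else 0).

(* A family of m homogeneous polynomials of degree k whose images in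
   (R/I)_k are K-linearly independent. *)
Definition indep_mod (K : fieldType) (n : nat) (I : {mpoly K[n]} -> Prop)
    (k m : nat) (f : 'I_m -> {mpoly K[n]}) : Prop :=
  (forall i, f i \is k.-homog) /\
  (forall c : 'I_m -> K, I (\sum_(i < m) c i *: f i) -> forall i, c i = 0).

(* dim_K (R/I)_k = m  (for a homogeneous ideal I): m is the maximal size of
   a family of degree-k forms that is linearly independent modulo I. *)
Definition hilb_value (K : fieldType) (n : nat) (I : {mpoly K[n]} -> Prop)
    (k m : nat) : Prop :=
  (exists f : 'I_m -> {mpoly K[n]}, indep_mod I k f) /\
  (forall m' (f : 'I_m' -> {mpoly K[n]}), indep_mod I k f -> (m' <= m)%N).

Definition is_hilbert_function (K : fieldType) (n : nat)
    (I : {mpoly K[n]} -> Prop) (H : nat -> nat) : Prop :=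
  forall k, hilb_value I k (H k).

Definition agrees_from (H : nat -> nat) (P : {poly rat}) (k0 : nat) : Prop :=
  forall k, (k0 <= k)%N -> (H k)%:R = P.[k%:R].

Definition is_hilbert_poly (H : nat -> nat) (P : {poly rat}) : Prop :=
  exists k0, agrees_from H P k0.

Definition regularity_index (H : nat -> nat) (r : nat) : Prop :=
  exists P : {poly rat}, is_hilbert_poly H P /\ agrees_from H P r /\
    (forall r', agrees_from H P r' -> (r <= r')%N).

(* Main.v *)
Require Import Defs.
From HB Require Import structures.
From mathcomp Require Import all_boot all_order all_algebra all_fingroup.
From mathcomp Require Import cyclic pgroup sylow.
From mathcomp Require Import mpoly.
From mathcomp Require Import zify ring lra.
Set Implicit Arguments. Unset Strict Implicit. Unset Printing Implicit Defensive.

Definition indepE n (e : rel 'I_n) (A : {set 'I_n}) : bool :=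
  [forall i, forall j, ((i \in A) && (j \in A)) ==> ~~ e i j].


Section Comb.
Variables (n : nat) (S : seq nat).

Definition indep (A : {set 'I_n}) : bool := indepE (@circ_edge n S) A.

Lemma val_ordS (i : 'I_n) : (ordS i : nat) = if i.+1 == n then 0 else i.+1.
Proof.
rewrite /=; case: eqP => [->|h]; first by rewrite modnn.
by rewrite modn_small //; have := ltn_ord i; lia.
Qed.

Lemma cdist_ordS (i j : 'I_n) : cdist (ordS i) (ordS j) = cdist i j.
Proof.
rewrite /cdist !val_ordS; have := ltn_ord i; have := ltn_ord j.
by case: eqP; case: eqP; lia.
Qed.

Lemma circ_edge_ordS (i j : 'I_n) : circ_edge S (ordS i) (ordS j) = circ_edge S i j.
Proof. by rewrite /circ_edge cdist_ordS (inj_eq (@ordS_inj n)). Qed.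

Definition rot : {perm 'I_n} := perm (@ordS_inj n).

Lemma rotE i : rot i = ordS i. Proof. by rewrite permE. Qed.

Lemma indep_rot (A : {set 'I_n}) : indep (rot @: A) = indep A.
Proof.
apply/forallP/forallP => h i.
  apply/forallP => j; apply/implyP => /andP[iA jA].
  have := forallP (h (rot i)) (rot j).
  rewrite !imset_f //= !rotE circ_edge_ordS; exact.
apply/forallP => j; apply/implyP => /andP[/imsetP[i' i'A ->] /imsetP[j' j'A ->]].
by rewrite !rotE circ_edge_ordS; have := forallP (h i') j'; rewrite i'A j'A.
Qed.

Lemma iter_ordS k (i : 'I_n) : (iter k (@ordS n) i : nat) = (i + k) %% n.
Proof.
elim: k => [|k IH] /=; first by rewrite addn0 modn_small.
by rewrite IH addnS -addn1 modnDml addn1.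
Qed.


Lemma rotX k (i : 'I_n) : ((rot ^+ k)%g i : nat) = (i + k) %% n.
Proof.
rewrite permX -iter_ordS; congr (nat_of_ord _).
by elim: k => //= k ->; rewrite rotE.
Qed.

Hypothesis n_prime : prime n.

Lemma n_gt1 : 1 < n. Proof. exact: prime_gt1. Qed.

Lemma rot_pgroup : pgroup n <[rot]>%g.
Proof.
rewrite /pgroup; apply: (pnat_dvd _ (pnat_id n_prime)).
rewrite order_dvdn; apply/eqP/permP => i; rewrite perm1; apply: val_inj.
by rewrite /= rotX modnDr modn_small.
Qed.

Definition Sodd := [set A : {set 'I_n} | indep A && odd #|A|].
Definition Seven := [set A : {set 'I_n} | indep A && ~~ odd #|A|].

Lemma acts_rot (b : bool) :
  [acts <[rot]>%g, on [set A : {set 'I_n} | indep A && (odd #|A| == b)] | 'P^*].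
Proof.
rewrite cycle_subG; apply/astabsP => A. rewrite !inE /= setactE.
have -> : [set 'P%act x rot | x in A] = rot @: A by apply: eq_imset => x.
by rewrite indep_rot card_imset //; exact: perm_inj.
Qed.

Lemma fix_full (A : {set 'I_n}) :
  A \in afix ('P^*) <[rot]>%g -> A != set0 -> A = setT.
Proof.
move=> /afixP hA /set0Pn[i0 i0A]; apply/setP => t; rewrite inE.
have := hA _ (mem_cycle rot (t + n - i0)); rewrite /= setactE => eA.
rewrite -eA; apply/imsetP; exists i0 => //=; apply: val_inj.
rewrite /= rotX; have := ltn_ord i0; have := ltn_ord t => h1 h2.
rewrite (_ : i0 + (t + n - i0) = t + n); last lia.
by rewrite modnDr modn_small.
Qed.

Hypothesis S_nonempty : S != [::].
Hypothesis S_range : {subset S <= [pred s | (0 < s <= n./2)%N]}.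

Lemma full_not_indep : ~~ indep setT.
Proof.
case Se: S S_nonempty => [|s S'] // _.
have sS : s \in S by rewrite Se mem_head.
have /andP[s0 sn] := S_range sS.
rewrite geq_half_double in sn.
have n0 : 0 < n by have := n_gt1; lia.
have sn' : s < n by rewrite -!muln2 in sn; lia.
apply/forallP => /(_ (Ordinal n0)) /forallP /(_ (Ordinal sn')).
rewrite !inE /= /circ_edge /cdist /=.
have -> : (maxn 0 s - minn 0 s) = s by lia.
have -> : minn s (n - s) = s by rewrite -!muln2 in sn; lia.
by rewrite sS andbT; apply/negP; rewrite -val_eqE /= eq_sym; lia.
Qed.

Lemma Sodd_mod : #|[set A : {set 'I_n} | indep A && (odd #|A| == true)]| = 0 %[mod n].
Proof.
rewrite (pgroup_fix_mod rot_pgroup (acts_rot true)).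
suff -> : [set A : {set 'I_n} | indep A && (odd #|A| == true)] :&: afix ('P^*) <[rot]>%g = set0.
  by rewrite cards0.
apply/setP => A; rewrite !inE; apply/negP => /andP[/andP[iA oA] fA].
have A0 : A != set0 by apply: contraTneq oA => ->; rewrite cards0.
by move: iA; rewrite (@fix_full A ltac:(by rewrite inE) A0) (negbTE full_not_indep).
Qed.

Lemma Seven_mod : #|[set A : {set 'I_n} | indep A && (odd #|A| == false)]| = 1 %[mod n].
Proof.
rewrite (pgroup_fix_mod rot_pgroup (acts_rot false)).
suff -> : [set A : {set 'I_n} | indep A && (odd #|A| == false)] :&: afix ('P^*) <[rot]>%g = [set set0].
  by rewrite cards1.
apply/setP => A; rewrite !inE; apply/idP/idP.
  move=> /andP[/andP[iA oA] fA]; apply/negPn/negP => A0.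
  by move: iA; rewrite (@fix_full A ltac:(by rewrite inE) A0) (negbTE full_not_indep).
move=> /eqP ->; rewrite cards0 /= andbT; apply/andP; split.
  by apply/forallP => i; apply/forallP => j; rewrite !inE.
by apply/subsetP => a _; rewrite inE /= setactE imset0.
Qed.

End Comb.


Section Count.
Variable n : nat.

Definition supp k (f : {ffun 'I_n -> 'I_k.+1}) : {set 'I_n} := [set i | 0 < f i].
Definition fsum k (f : {ffun 'I_n -> 'I_k.+1}) : nat := \sum_i (f i : nat).
Definition cnt k (A : {set 'I_n}) :=
  #|[set f : {ffun 'I_n -> 'I_k.+1} | (fsum f == k) && (supp f == A)]|.

Lemma fsum_supp k (f : {ffun 'I_n -> 'I_k.+1}) : fsum f = \sum_(i in supp f) f i.
Proof.
rewrite /fsum (bigID (fun i => i \in supp f)) /= [X in _ + X]big1 ?addn0 //.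
by move=> i; rewrite inE -eqn0Ngt => /eqP.
Qed.

Lemma cnt0 k : 0 < k -> cnt k set0 = 0.
Proof.
move=> k0; apply/eqP; rewrite cards_eq0; apply/eqP/setP => f; rewrite !inE.
apply/negP => /andP[/eqP s /eqP e]; move: s; rewrite fsum_supp e big_set0; lia.
Qed.

Section CntA.
Variables (k a : nat) (A : {set 'I_n}) (hA : #|A| = a.+1) (k_gt : a < k).
Variables (x0 : 'I_n) (Ax0 : x0 \in A).
Let k' := k - a.+1.

Definition ev (j : 'I_a.+1) : 'I_n := enum_val (cast_ord (esym hA) j).
Definition rk (i : 'I_n) : 'I_a.+1 := cast_ord hA (enum_rank_in Ax0 i).
Lemma evK : cancel ev rk.
Proof. by move=> j; rewrite /rk /ev enum_valK_in cast_ordKV. Qed.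
Lemma ev_in j : ev j \in A. Proof. exact: enum_valP. Qed.
Lemma rkK : {in A, cancel rk ev}.
Proof. by move=> i iA; rewrite /ev /rk cast_ordK enum_rankK_in. Qed.

Lemma sumA (F : 'I_n -> nat) : \sum_(i in A) F i = \sum_(j < a.+1) F (ev j).
Proof.
rewrite (reindex ev); last first.
  by exists rk => [j _|i]; [exact: evK | rewrite inE; exact: rkK].
by apply: eq_bigl => j; rewrite ev_in.
Qed.

Definition g (t : a.+1.-tuple 'I_k'.+1) : {ffun 'I_n -> 'I_k.+1} :=
  [ffun i => if i \in A then inord (tnth t (rk i)).+1 else ord0].

Lemma g_val t i : (g t i : nat) = if i \in A then (tnth t (rk i)).+1 else 0.
Proof.
rewrite ffunE; case: ifP => // _; rewrite inordK //.
have := ltn_ord (tnth t (rk i)); rewrite /k'; lia.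
Qed.

Lemma g_inj : injective g.
Proof.
move=> t1 t2 e; apply: eq_from_tnth => j; apply: ord_inj.
have := congr1 (fun f : {ffun 'I_n -> 'I_k.+1} => (f (ev j) : nat)) e.
by rewrite /= !g_val ev_in evK; case.
Qed.

Lemma sum_succ (u : 'I_a.+1 -> nat) : \sum_(j < a.+1) (u j).+1 = \sum_(j < a.+1) u j + a.+1.
Proof.
rewrite (eq_bigr (fun j => u j + 1)); last by move=> j _; rewrite addn1.
by rewrite big_split /= sum1_card card_ord.
Qed.

Lemma T_M : g @: [set t : a.+1.-tuple 'I_k'.+1 | \sum_(i <- t) (i : nat) == k']
  = [set f : {ffun 'I_n -> 'I_k.+1} | (fsum f == k) && (supp f == A)].
Proof.
apply/setP => f; apply/imsetP/idP.
  case=> t; rewrite inE => /eqP st ->; rewrite inE.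
  have sA : supp (g t) = A.
    by apply/setP => i; rewrite inE g_val; case: ifP.
  rewrite sA eqxx andbT fsum_supp sA sumA.
  rewrite (eq_bigr (fun j => (tnth t j).+1)); last first.
    by move=> j _; rewrite g_val ev_in evK.
  by rewrite sum_succ -(big_tuple _ _ _ predT (fun i : 'I_k'.+1 => (i : nat))) st /k'; apply/eqP; lia.
rewrite inE => /andP[/eqP sf /eqP sA].
have fpos j : 0 < f (ev j).
  by have := ev_in j; rewrite -sA inE.
pose u j := (f (ev j) : nat).-1.
have su : \sum_(j < a.+1) u j = k'.
  have : \sum_(j < a.+1) (u j).+1 = k.
    rewrite -sf fsum_supp sA sumA; apply: eq_bigr => j _.
    by rewrite /u prednK.
  rewrite sum_succ /k'; lia.
have ub j : u j < k'.+1.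
  rewrite ltnS -su (bigD1 j) //=; exact: leq_addr.
exists [tuple inord (u j) | j < a.+1].
  rewrite inE big_tuple; apply/eqP; rewrite -[RHS]su; apply: eq_bigr => j _.
  by rewrite tnth_mktuple (inordK (ub j)).
apply/ffunP => i; apply: ord_inj; rewrite g_val; case: ifP => iA.
  by rewrite tnth_mktuple (inordK (ub _)) /u rkK // prednK // -(rkK iA).
by apply/eqP; rewrite -leqn0 leqNgt; apply/negP => h; move: iA; rewrite -sA inE h.
Qed.

Lemma cntA_big : cnt k A = 'C(k.-1, a).
Proof.
rewrite /cnt -T_M card_imset; last exact: g_inj.
rewrite card_ord_partitions; congr 'C(_, _); rewrite /k'; lia.
Qed.

End CntA.

Lemma cntA k (A : {set 'I_n}) : 0 < k -> A != set0 -> cnt k A = 'C(k.-1, #|A|.-1).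
Proof.
move=> k0 /set0Pn[x0 Ax0].
have hA : #|A| = (#|A|.-1).+1 by rewrite prednK //; apply/card_gt0P; exists x0.
have [lt|ge] := ltnP (#|A|.-1) k.
  by rewrite (cntA_big hA lt Ax0).
rewrite bin_small; last by lia.
apply/eqP; rewrite cards_eq0; apply/eqP/setP => f; rewrite !inE.
apply/negP => /andP[/eqP s /eqP e]; move: s; rewrite fsum_supp e => s.
have : \sum_(i in A) 1 <= \sum_(i in A) (f i : nat).
  by apply: leq_sum => i; rewrite -e inE.
rewrite sum1_card s; lia.
Qed.

End Count.

Import GRing.Theory Num.Theory.
Local Open Scope ring_scope.

Section Hilb.
Variables (K : fieldType) (n : nat) (e : rel 'I_n).
Hypothesis e_irr : forall i, ~~ e i i.
Local Notation I := (@in_edge_ideal K n e).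

Lemma I0 : I 0.
Proof.
exists (fun _ _ => 0); symmetry; apply: big1 => i _; apply: big1 => j _.
by rewrite mul0r; case: ifP.
Qed.

Lemma ID p q : I p -> I q -> I (p + q).
Proof.
move=> [c1 ->] [c2 ->]; exists (fun i j => c1 i j + c2 i j).
rewrite -big_split; apply: eq_bigr => i _; rewrite -big_split; apply: eq_bigr => j _.
case: (e i j) => //; [exact: (esym (mulrDl _ _ _)) | exact: addr0].
Qed.

Lemma IM p q : I p -> I (q * p).
Proof.
move=> [c ->]; exists (fun i j => q * c i j).
rewrite mulr_sumr; apply: eq_bigr => i _; rewrite mulr_sumr; apply: eq_bigr => j _.
by case: (e i j); rewrite ?mulr0 // mulrA.
Qed.

Lemma IZ a p : I p -> I (a *: p).
Proof. by move=> h; rewrite -mul_mpolyC; apply: IM. Qed.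

Lemma Isum (T : Type) (r : seq T) (P : pred T) (F : T -> {mpoly K[n]}) :
  (forall x, P x -> I (F x)) -> I (\sum_(x <- r | P x) F x).
Proof. by move=> h; apply: (big_ind I I0 ID). Qed.

Lemma Igen i j q : e i j -> I (q * ('X_i * 'X_j)).
Proof.
move=> eij; exists (fun a b => if (a == i) && (b == j) then q else 0).
rewrite (bigD1 i) //= (bigD1 j) //= !eqxx eij /= big1 ?addr0.
  rewrite big1 ?addr0 // => a /negbTE ->; apply: big1 => b _.
  by case: ifP; rewrite ?mul0r.
move=> b /negbTE ->; by case: ifP; rewrite ?mul0r.
Qed.

Lemma KL p (m : 'X_{1..n}) : I p ->
  (forall i j, e i j -> (m i == 0%N) || (m j == 0%N)) -> p@_m = 0.
Proof.
move=> [c ->] hm; rewrite !raddf_sum /=; apply: big1 => i _.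
rewrite raddf_sum /=; apply: big1 => j _; case: ifP => eij; last exact: mcoeff0.
apply/eqP; apply/negP => /negP; rewrite -mcoeff_msupp -mpolyXD.
rewrite (perm_mem (msuppMX _ _)) => /mapP [m' _ em].
have := hm i j eij; rewrite em !mnmDE !mnm1E !eqxx /=; lia.
Qed.

Definition mon k (f : {ffun 'I_n -> 'I_k.+1}) : 'X_{1..n} := [multinom (f i : nat) | i < n].

Lemma mdeg_mon k f : mdeg (@mon k f) = fsum f.
Proof. by rewrite mdegE; apply: eq_bigr => i _; rewrite mnmE. Qed.

Lemma mon_inj k : injective (@mon k).
Proof.
move=> f g /mnmP h; apply/ffunP => i; apply: ord_inj.
by have := h i; rewrite !mnmE.
Qed.

Definition Hstd k := [set f : {ffun 'I_n -> 'I_k.+1} | (fsum f == k) && indepE e (supp f)].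
Definition H k := #|Hstd k|.

Lemma mon_indep k f : f \in Hstd k ->
  forall i j, e i j -> ((@mon k f) i == 0%N) || ((mon f) j == 0%N).
Proof.
rewrite inE => /andP[_ /forallP hf] i j eij.
have := forallP (hf i) j; rewrite !inE !mnmE eij /= implybF negb_and -!eqn0Ngt.
by [].
Qed.

Lemma hilb_lower k : exists F : 'I_(H k) -> {mpoly K[n]}, indep_mod I k F.
Proof.
exists (fun j => 'X_[mon (enum_val j)]); split.
  move=> j; rewrite dhomogX /= mdeg_mon.
  by have := enum_valP j; rewrite inE => /andP[].
move=> c hI j0.
have := KL (m := mon (enum_val j0)) hI (mon_indep (enum_valP j0)).
rewrite raddf_sum /= (bigD1 j0) //= big1 ?addr0.
  by rewrite mcoeffZ mcoeffX eqxx mulr1.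
move=> j hj; rewrite mcoeffZ mcoeffX.
rewrite (inj_eq (@mon_inj k)) (inj_eq enum_val_inj) (negbTE hj) mulr0 //.
Qed.


Lemma mdeg_ge (m : 'X_{1..n}) i : (m i <= mdeg m)%N.
Proof. by rewrite mdegE (bigD1 i) //= leq_addr. Qed.

Lemma hilb_upper k m' (f : 'I_m' -> {mpoly K[n]}) : indep_mod I k f -> (m' <= H k)%N.
Proof.
move=> [hom hind]; rewrite leqNgt; apply/negP => lt.
pose M := \matrix_(i < m', s < H k) (f i)@_(mon (enum_val s)).
have : (0 < \rank (kermx M))%N.
  by rewrite mxrank_ker; have := rank_leq_col M; lia.
rewrite lt0n mxrank_eq0 => kM.
have [r hr] : exists r, row r (kermx M) != 0.
  case: (pickP (fun r => row r (kermx M) != 0)) => [r hr|none]; first by exists r.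
  suff k0 : kermx M = 0 by rewrite k0 eqxx in kM.
  apply/row_matrixP => r'.
  by move/negbFE/eqP: (none r') ->; rewrite row0.
set c := row r (kermx M) in hr.
have cM : c *m M = 0 by apply/sub_kermxP; exact: row_sub.
pose g := \sum_(i < m') c 0 i *: f i.
have hg : g \is k.-homog.
  by apply: rpred_sum => i _; apply: rpredZ; exact: hom.
suff Ig : I g.
  have c0 := hind (fun i => c 0 i) Ig.
  apply: (negP hr); apply/eqP/rowP => i; rewrite [RHS]mxE; exact: c0.
rewrite (mpolyE g) big_seq; apply: Isum => mm mmg; apply: IZ.
have [[i j] /= /andP[/andP[eij mi] mj]|none] :=
  pickP (fun p : 'I_n * 'I_n => e p.1 p.2 && (0 < mm p.1)%N && (0 < mm p.2)%N).
  have ij : i != j by apply/eqP => eij'; move: eij; rewrite eij' (negbTE (e_irr j)).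
  have le : (U_(i) + U_(j) <= mm)%MM.
    apply/mnm_lepP => l; rewrite mnmDE !mnm1E.
    have [il|il] := eqVneq i l; have [jl|jl] := eqVneq j l => /=.
    - by move: ij; rewrite il jl eqxx.
    - by rewrite -il.
    - by rewrite -jl.
    - by [].
  by rewrite -(submK le) mpolyXD mpolyXD; apply: Igen.
have dm : mdeg mm = k by have := (dhomogP _ _ _ hg) mm mmg.
pose fm : {ffun 'I_n -> 'I_k.+1} := [ffun i => inord (mm i)].
have fmv i : (fm i : nat) = mm i by rewrite ffunE inordK // ltnS -dm mdeg_ge.
have monfm : mon fm = mm by apply/mnmP => i; rewrite mnmE fmv.
have fmH : fm \in Hstd k.
  rewrite inE; apply/andP; split; first by rewrite -mdeg_mon monfm dm.
  apply/forallP => i; apply/forallP => j; apply/implyP; rewrite !inE !fmv => /andP[mi mj].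
  by have := none (i, j); rewrite /= mi mj !andbT => ->.
pose s := enum_rank_in fmH fm.
have es : enum_val s = fm by rewrite /s enum_rankK_in.
have : g@_mm = 0.
  have := congr1 (fun A : 'M_(1, H k) => A 0 s) cM; rewrite !mxE => <-.
  rewrite /g raddf_sum; apply: eq_bigr => j _.
  by rewrite /= mcoeffZ !mxE -monfm -es.
by move: mmg; rewrite mcoeff_msupp => /eqP.
Qed.

End Hilb.

Definition Bp (j : nat) : {poly rat} :=
  (j`!%:R)^-1 *: \prod_(t < j) ('X - (t.+1)%:R%:P).

Lemma prod_ffact (N j : nat) :
  \prod_(t < j) ((N.+1)%:R - (t.+1)%:R : rat) = (N ^_ j)%:R.
Proof.
elim: j => [|j IH]; first by rewrite big_ord0.
rewrite big_ord_recr /= IH ffactnSr natrM.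
have [le|lt] := leqP j N.
  by rewrite -natrB // subSS.
by rewrite ffact_small // !mul0r.
Qed.

Lemma Bp_eval (k j : nat) : (0 < k)%N -> (Bp j).[k%:R] = ('C(k.-1, j))%:R.
Proof.
case: k => // N _ /=.
rewrite /Bp hornerZ horner_prod.
rewrite (eq_bigr (fun t : 'I_j => ((N.+1)%:R - (t.+1)%:R : rat))); last first.
  by move=> t _; rewrite hornerXsubC.
rewrite prod_ffact -bin_ffact natrM mulrC mulfK //.
by rewrite pnatr_eq0 -lt0n fact_gt0.
Qed.

Lemma Bp_eval0 (j : nat) : (Bp j).[0] = (-1) ^+ j.
Proof.
rewrite /Bp hornerZ horner_prod.
rewrite (eq_bigr (fun t : 'I_j => (- (t.+1)%:R : rat))); last first.
  by move=> t _; rewrite hornerXsubC sub0r.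
have -> : \prod_(t < j) (- (t.+1)%:R : rat) = (-1) ^+ j * j`!%:R.
  elim: j => [|j IH]; first by rewrite big_ord0 expr0 mul1r.
  rewrite big_ord_recr /= IH factS natrM exprS.
  ring.
by rewrite mulrC mulfK // pnatr_eq0 -lt0n fact_gt0.
Qed.

Section Main.
Variables (n : nat) (S : seq nat).
Local Notation e := (@circ_edge n S).

Lemma e_irr : forall i, ~~ e i i.
Proof. by move=> i; rewrite /circ_edge eqxx. Qed.

Lemma inner k (A : {set 'I_n}) : indepE e A ->
  (\sum_(f | (f \in Hstd e k) && (supp f == A)) 1 = cnt k A)%N.
Proof.
move=> iA; rewrite sum1_card /cnt; apply: eq_card => f; rewrite !inE.
rewrite unfold_in /= inE; by case: (supp f =P A) => [->|]; rewrite ?andbF ?andbT // iA andbT.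
Qed.

Lemma H_split k : (0 < k)%N ->
  H e k = (\sum_(A : {set 'I_n} | indepE e A && (A != set0)) 'C(k.-1, #|A|.-1))%N.
Proof.
move=> k0; rewrite /H -sum1_card.
rewrite (partition_big (@supp n k) (indepE e)); last by move=> f; rewrite inE => /andP[].
rewrite (bigID (fun A => A == set0)) /= big1 ?add0n; last first.
  by move=> A /andP[iA /eqP eA]; rewrite inner // eA cnt0.
by apply: eq_bigr => A /andP[iA nA]; rewrite inner // cntA.
Qed.

Lemma H0 : H e 0 = 1%N.
Proof.
rewrite /H (_ : Hstd e 0 = setT); first by rewrite cardsT card_ffun !card_ord exp1n.
apply/setP => f; rewrite !inE.
have f0 i : (f i : nat) = 0%N by have := ltn_ord (f i); lia.
have -> : fsum f = 0%N by rewrite /fsum big1.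
rewrite eqxx /=; apply/forallP => i; apply/forallP => j.
by rewrite !inE f0.
Qed.

Definition Ppoly : {poly rat} :=
  \sum_(A : {set 'I_n} | indepE e A && (A != set0)) Bp (#|A|.-1).

Lemma agree1 : agrees_from (H e) Ppoly 1.
Proof.
move=> k k1; rewrite H_split // natr_sum horner_sum.
by apply: eq_bigr => A _; rewrite Bp_eval.
Qed.

Lemma cntsum (P : pred {set 'I_n}) (x : rat) : \sum_(A | P A) x = x *+ #|P|.
Proof. by rewrite sumr_const. Qed.

Lemma P0 : Ppoly.[0] = 1 - ((#|[set A : {set 'I_n} | indep S A && (odd #|A| == false)]|)%:R
  - (#|[set A : {set 'I_n} | indep S A && (odd #|A| == true)]|)%:R).
Proof.
rewrite /Ppoly horner_sum.
rewrite (eq_bigr (fun A : {set 'I_n} => - (-1) ^+ #|A| : rat)); last first.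
  move=> A /andP[_ /set0Pn [x xA]]; rewrite Bp_eval0.
  have -> : #|A| = (#|A|.-1).+1 by rewrite prednK //; apply/card_gt0P; exists x.
  by rewrite /= exprS mulN1r opprK.
rewrite sumrN.
have T : \sum_(A : {set 'I_n} | indepE e A) (-1) ^+ #|A| =
    1 + \sum_(A : {set 'I_n} | indepE e A && (A != set0)) ((-1) ^+ #|A| : rat).
  rewrite (bigD1 set0) /=; last by apply/forallP => i; apply/forallP => j; rewrite inE.
  by rewrite cards0 expr0.
have T2 : \sum_(A : {set 'I_n} | indepE e A) ((-1) ^+ #|A| : rat) =
   (#|[set A : {set 'I_n} | indep S A && (odd #|A| == false)]|)%:R
  - (#|[set A : {set 'I_n} | indep S A && (odd #|A| == true)]|)%:R.
  rewrite (bigID (fun A : {set 'I_n} => odd #|A|)) /= addrC.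
  rewrite (eq_bigr (fun _ => 1)); last by move=> A /andP[_ /negbTE o]; rewrite -signr_odd o.
  rewrite [X in _ + X](eq_bigr (fun _ => -1)); last by move=> A /andP[_ o]; rewrite -signr_odd o.
  rewrite !cntsum.
  rewrite (@eq_card _ (fun A : {set 'I_n} => indepE e A && ~~ odd #|A|)
     [set A : {set 'I_n} | indep S A && (odd #|A| == false)]); last first.
    move=> A; rewrite -[RHS]/(A \in [set A : {set 'I_n} | indep S A && (odd #|A| == false)]) inE.
    by rewrite -[LHS]/(indepE e A && ~~ odd #|A|) eqbF_neg.
  rewrite (@eq_card _ (fun A : {set 'I_n} => indepE e A && odd #|A|)
     [set A : {set 'I_n} | indep S A && (odd #|A| == true)]); first by rewrite mulNrn.
  move=> A; rewrite -[RHS]/(A \in [set A : {set 'I_n} | indep S A && (odd #|A| == true)]) inE.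
  by rewrite -[LHS]/(indepE e A && odd #|A|) eqb_id.
rewrite -T2 T; lra.
Qed.

End Main.

Theorem theorem2p3 (K : fieldType) (n : nat) (S : seq nat) :
  prime n ->
  S != [::] ->
  {subset S <= [pred s | (0 < s <= n./2)%N]} ->
  exists H : nat -> nat,
    is_hilbert_function (in_edge_ideal (K := K) (circ_edge (n := n) S)) H /\
    regularity_index H 1.
Proof.
move=> pn Sne Sr.
exists (H (@circ_edge n S)); split.
  move=> k; split; first exact: hilb_lower.
  by move=> m' f; apply: hilb_upper; exact: e_irr.
exists (Ppoly n S); split; first by exists 1%N; exact: agree1.
split; first exact: agree1.
move=> [|r'] // h0; exfalso.
have := h0 0%N (leqnn 0); rewrite H0 P0.
set Ev := #|_|; set Od := #|_|.
move=> h.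
have eq : Ev = Od.
  apply/eqP; rewrite -(eqr_nat rat); apply/eqP.
  have : (Ev%:R - Od%:R : rat) = 0 by move: h; lra.
  by move/eqP; rewrite subr_eq0 => /eqP.
have h1 := Seven_mod pn Sne Sr.
have h2 := Sodd_mod pn Sne Sr.
rewrite -/Ev in h1; rewrite -/Od in h2.
move: h1 h2; rewrite eq => ->; rewrite mod0n modn_small //; exact: prime_gt1.
Qed.
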